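(* Let $k,n\in\mathbb N$. There do not exist uniformly bounded families $\mathcal V_1,\dots,\mathcal V_n$ of subsets of $(k\mathbb Z)^n$, each $2k$-disjoint, such that $\bigcup_{i=1}^n\mathcal V_i$ covers $(k\mathbb Z)^n$.
   Context: $k\mathbb Z=\{kl:l\in\mathbb Z\}$, and $(k\mathbb Z)^n\subset\mathbb Z^n$ carries the sup-metric $d((x_1,\dots,x_n),(y_1,\dots,y_n))=\max_i|x_i-y_i|$. A family $\mathcal A$ of subsets is uniformly bounded if there is $C>0$ with $\operatorname{diam}A\le C$ for all $A\in\mathcal A$; it is $r$-disjoint if $d(A_1,A_2)\ge r$ for all distinct $A_1,A_2\in\mathcal A$. *)

(* Defs.v *)
From mathcomp Require Import all_boot all_order all_algebra.
Set Implicit Arguments. Unset Strict Implicit. Unset Printing Implicit Defensive.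
Import Order.TTheory GRing.Theory Num.Theory.

Definition point (n : nat) := 'I_n -> int.

Definition supdist (n : nat) (x y : point n) : nat :=
  \max_(i < n) `|x i - y i|%N.

Definition lattice (k n : nat) (x : point n) : Prop :=
  forall i : 'I_n, (k%:Z %| x i)%Z.

Definition setfam (n : nat) := (point n -> Prop) -> Prop.

Definition unif_bounded (n : nat) (V : setfam n) : Prop :=
  exists C : nat, forall A, V A -> forall x y, A x -> A y -> supdist x y <= C.

(* r-disjoint: d(A1,A2) >= r for distinct members A1, A2
   (d(A1,A2) = inf of distances, hence >= r iff all pointwise distances are) *)
Definition r_disjoint (n : nat) (r : nat) (V : setfam n) : Prop :=
  forall A1 A2, V A1 -> V A2 -> A1 <> A2 ->
    forall x y, A1 x -> A2 y -> r <= supdist x y.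

(* Main.v *)
Require Import Defs.
From mathcomp Require Import all_boot all_order all_algebra all_fingroup zify.
From Stdlib Require Import FunctionalExtensionality Classical ClassicalEpsilon ClassicalDescription.
Set Implicit Arguments. Unset Strict Implicit. Unset Printing Implicit Defensive.

Lemma odd_sumF (I : finType) (F : I -> nat) :
  odd (\sum_i F i) = odd (\sum_i (odd (F i) : nat)).
Proof.
apply: (big_ind2 (fun a b => odd a = odd b)) => //.
  by move=> a1 b1 a2 b2 h1 h2; rewrite !oddD h1 h2.
by move=> i _; case: (odd (F i)).
Qed.

Lemma inv_parity (T : finType) (f : T -> T) (A : {set T}) :
  (forall t, t \in A -> f t \in A) -> (forall t, t \in A -> f (f t) = t) ->
  odd #|A| = odd #|[set t in A | f t == t]|.
Proof.
have [N] := ubnP #|A|; elim: N A => // N IH A ltAN clo inv.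
case: (pickP [pred t | (t \in A) && (f t != t)]) => [a /andP[aA fa] | nofix]; last first.
  suff -> : [set t in A | f t == t] = A by [].
  apply/setP => t; rewrite !inE.
  case tA: (t \in A); rewrite ?andbF //=; have := nofix t; rewrite /= tA /=.
  by move/negbFE => ->.
have faA := clo a aA.
set B := A :\ a :\ f a.
have cardA : #|A| = (#|B|).+2.
  rewrite (cardsD1 a A) aA (cardsD1 (f a) (A :\ a)) !inE fa faA.
  by rewrite add1n.
have Bsub : forall t, t \in B -> [/\ t != f a, t != a & t \in A].
  by move=> t; rewrite !inE => /and3P.
have -> : [set t in A | f t == t] = [set t in B | f t == t].
  apply/setP => t; rewrite !inE.
  case ft: (f t == t); rewrite ?andbF ?andbT //.
  case tA: (t \in A); rewrite ?andbF ?andbT //=.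
  apply/esym/andP; split.
    apply/eqP => tfa; move/eqP: ft; rewrite tfa inv // => afa.
    by move: fa; rewrite -afa eqxx.
  by apply/eqP => ta; move: fa; rewrite -ta (eqP ft) eqxx.
rewrite cardA /= (IH B) ?negbK //.
- by move: ltAN; rewrite cardA; lia.
- move=> t /Bsub[t1 t2 t3]; rewrite !inE clo // andbT; apply/andP; split.
    by apply/eqP => e; move/eqP: t2; apply; rewrite -(inv t t3) e inv.
  by apply/eqP => e; move/eqP: t1; apply; rewrite -(inv t t3) e.
- by move=> t /Bsub[_ _ /inv].
Qed.

Lemma dec_rev n (g : 'I_n -> 'I_n) :
  (forall c i : 'I_n, c < i -> g i < g c) -> forall c : 'I_n, (g c : nat) = n.-1 - c.
Proof.
move=> dec.
have low : forall d (c : 'I_n), c + d = n.-1 -> d <= g c.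
  elim=> [//|d IH] c cd.
  have lt : c.+1 < n by lia.
  have := IH (Ordinal lt) => /=; rewrite addSnnS => /(_ cd) h.
  have := dec c (Ordinal lt); rewrite /= ltnSn => /(_ isT); lia.
have up : forall d (c : 'I_n), (c : nat) = d -> g c + c <= n.-1.
  elim=> [|d IH] c cd.
    have := ltn_ord (g c); lia.
  have lt : d < n by have := ltn_ord c; lia.
  have := IH (Ordinal lt) erefl.
  have := dec (Ordinal lt) c; rewrite /= cd ltnSn => /(_ isT); lia.
move=> c; have := low (n.-1 - c) c; have := up c c erefl.
have := ltn_ord c; lia.
Qed.

Lemma simplex_odd n (g : 'I_n.+1 -> nat) : (forall j, g j <= n) ->
  odd #|[set j : 'I_n.+1 | [forall c : 'I_n, [exists j', (j' != j) && (g j' == c.+1)]]]|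
  = [forall c : 'I_n.+1, [exists j, g j == c]].
Proof.
move=> gle; set D := [set j | _].
case: (set_0Vmem D) => [D0 | [j0 j0D]].
  rewrite D0 cards0 /=; apply/esym/negbTE/negP => /forallP full.
  have/existsP[j0 /eqP g0] := full ord0.
  suff : j0 \in D by rewrite D0 inE.
  rewrite inE; apply/forallP => c.
  have/existsP[j' /eqP gj'] := full (inord c.+1).
  apply/existsP; exists j'; rewrite gj' inordK ?eqxx ?andbT; last by have := ltn_ord c; lia.
  by apply/eqP => e; move: gj'; rewrite e g0 inordK //; have := ltn_ord c; lia.
pose w (c : 'I_n) := odflt j0 [pick j' | (j' != j0) && (g j' == c.+1)].
have wP : forall c : 'I_n, (w c != j0) /\ g (w c) = c.+1.
  move=> c; rewrite /w; case: pickP => [j /andP[h1 /eqP h2] //|none].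
  move: j0D; rewrite inE => /forallP/(_ c)/existsP[j' hj'].
  by have := none j'; rewrite hj'.
have winj : injective w.
  move=> c c' e; apply/val_inj; have := (wP c).2; rewrite e (wP c').2 /=; case=> h; exact: esym h.
have surj : forall j, j = j0 \/ exists c, j = w c.
  have : j0 |: [set w c | c in 'I_n] = setT.
    apply/eqP; rewrite eqEcard subsetT cardsT card_ord cardsU1 card_imset //.
    rewrite card_ord; case: imsetP => //= -[c _ e].
    by have := (wP c).1; rewrite -e eqxx.
  move=> S j; have : j \in j0 |: [set w c | c in 'I_n] by rewrite S inE.
  rewrite in_setU1 => /orP[/eqP -> | /imsetP[c _ ->]]; [by left | by right; exists c].
have onlyw : forall (c : 'I_n) j, j != j0 -> g j = c.+1 -> j = w c.
  move=> c j nj gj; case: (surj j) => [e|[c' e]]; first by rewrite e eqxx in nj.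
  have := (wP c').2; rewrite -e gj => [[ec]].
  by rewrite e; congr w; apply/val_inj.
case g0: (g j0) => [|c0].
-
  have -> : D = [set j0].
    apply/setP => j; rewrite in_set1; apply/idP/idP => [|/eqP -> //].
    rewrite inE => /forallP dj; apply/negPn/negP => nj.
    case: (surj j) => [e|[c e]]; first by rewrite e eqxx in nj.
    have/existsP[j' /andP[nj' /eqP gj']] := dj c.
    have nj0 : j' != j0 by apply/eqP => e'; move: gj'; rewrite e' g0.
    by move: nj'; rewrite (onlyw c j' nj0 gj') e eqxx.
  rewrite cards1 /=; apply/esym/forallP => c; apply/existsP.
  case: (unliftP ord0 c) => [c' ->|->]; last by exists j0; rewrite g0.
  exists (w c'); rewrite (wP c').2 /=; by [].
- have c0n : c0 < n by have := gle j0; lia.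
  pose c0' := Ordinal c0n.
  have e0 : g j0 = c0'.+1 by [].
  have -> : D = [set j0; w c0'].
    apply/setP => j; rewrite !inE; apply/idP/idP => [|/orP[/eqP->|/eqP->]];
      [ | by move: j0D; rewrite inE | ].
      move=> /forallP dj; apply/negPn/negP; rewrite negb_or => /andP[nj0 njw].
      case: (surj j) => [e|[c e]]; first by rewrite e eqxx in nj0.
      have/existsP[j' /andP[nj' /eqP gj']] := dj c.
      case: (eqVneq j' j0) => [ej|nj'0].
        move: gj'; rewrite ej e0 => -[ec]; move: njw; rewrite e.
        have -> : c = c0' by apply/val_inj; rewrite /= ec.
        by rewrite eqxx.
      by move: nj'; rewrite (onlyw c j' nj'0 gj') e eqxx.
    apply/forallP => c; apply/existsP.
    case: (eqVneq c c0') => [->|nc].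
      by exists j0; rewrite e0 eqxx andbT eq_sym (wP c0').1.
    exists (w c); rewrite (wP c).2 eqxx andbT.
    by apply: contra nc => /eqP/winj ->.
  rewrite cards2 eq_sym (wP c0').1 /=; apply/esym/negbTE/negP => /forallP/(_ ord0).
  move=> /existsP[j /eqP gj0]; case: (surj j) => [e|[c e]].
    by move: gj0; rewrite e g0.
  by move: gj0; rewrite e (wP c).2.
Qed.

Lemma frame_char n (v : 'I_n -> nat) (i0 : 'I_n) : v i0 = 0 ->
  exists z : 'I_n, v z = 0 /\ forall i : 'I_n, z < i -> v i != 0.
Proof.
move=> h; case: (arg_maxnP (fun i : 'I_n => nat_of_ord i) (P := fun i => v i == 0) (i0 := i0)).
  by rewrite /= h.
move=> z /eqP vz zmax; exists z; split => // i zi; apply/negP => /eqP vi.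
by have := zmax i (introT eqP vi); lia.
Qed.

Section Core.
Variables (np m : nat).
Local Notation n := np.+1.
Variable lab : ('I_n -> nat) -> nat.
Hypothesis Hle : forall v, lab v <= n.
Hypothesis Htop : forall v (i : 'I_n), (forall j, v j <= m.+1) -> v i = m.+1 -> lab v != i.+1.
Hypothesis Hfr : forall v (c : 'I_n), (forall j, v j <= m.+1) -> v c = 0 ->
  (forall i : 'I_n, c < i -> v i != 0) -> lab v = c.+1.

Local Notation X := {ffun 'I_n -> 'I_m.+1}.
Local Notation P := {perm 'I_n}.

Definition vert (x : X) (s : P) (l : nat) : 'I_n -> nat :=
  fun i => x i + ((s^-1)%g i < l).

Lemma vert_box x s l j : vert x s l j <= m.+1.
Proof. rewrite /vert; have := ltn_ord (x j); case: (_ < l); lia. Qed.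

Definition rp (a : 'I_n) : 'I_n := if a == ord0 then ord_max else inord a.-1.
Definition rs (a : 'I_n) : 'I_n := if a == ord_max then ord0 else inord a.+1.
Lemma rpE a : nat_of_ord (rp a) = if (a : nat) == 0 then np else a.-1.
Proof.
rewrite /rp; have -> : (a == ord0) = ((a : nat) == 0) by [].
by case: eqP => // _; rewrite /= inordK //; have := ltn_ord a; lia.
Qed.
Lemma rsE a : nat_of_ord (rs a) = if (a : nat) == np then 0 else a.+1.
Proof.
rewrite /rs; have -> : (a == ord_max) = ((a : nat) == np) by [].
case: eqP => // h; rewrite /= inordK //; have := ltn_ord a; lia.
Qed.
Lemma rpK : cancel rp rs.
Proof.
move=> a; apply/val_inj; rewrite /= rsE rpE; case: a => [[|a] ha] /=; first by rewrite eqxx.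
by rewrite ifN_eq //; apply/eqP; lia.
Qed.
Lemma rsK : cancel rs rp.
Proof. by move=> a; apply/val_inj; rewrite /= rpE rsE; case: (@eqP _ (a : nat) np) => [->|_]. Qed.

Definition pr : P := perm (can_inj rpK).
Lemma prE a : pr a = rp a. Proof. by rewrite permE. Qed.
Lemma prVE a : (pr^-1)%g a = rs a.
Proof. by rewrite -{1}(rsK a) -prE permK. Qed.

Definition incr (x : X) a : X := [ffun i => if i == a then inord (x i).+1 else x i].
Definition decr (x : X) a : X := [ffun i => if i == a then inord (x i).-1 else x i].
Definition tau (j : 'I_n.+1) : P := tperm (inord j.-1) (inord j).

Lemma vert_mid (x : X) (s : P) (j : 'I_n.+1) (l : nat) : j != ord0 -> j != ord_max -> l != j ->
  vert x (tau j * s)%g l = vert x s l.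
Proof.
move=> j0 jm lj; apply: functional_extensionality => i; rewrite /vert.
congr (_ + _); rewrite invgM permM /tau tpermV.
have h0 : (j : nat) != 0 by [].
have h1 : (j : nat) != n by [].
have jn := ltn_ord j.
case: tpermP => [->|->|_ _] //; rewrite !inordK; try lia.
Qed.

Lemma vert_inc (x : X) (s : P) (l : nat) : x (s ord0) < m -> l < n ->
  vert (incr x (s ord0)) (pr^-1 * s)%g l = vert x s l.+1.
Proof.
move=> xs ln; apply: functional_extensionality => i; rewrite /vert ffunE.
rewrite invgM invgK permM prE rpE.
case: (eqVneq i (s ord0)) => [->|ne].
  rewrite permK /= inordK; last by lia.
  lia.
have : (s^-1)%g i != ord0 by apply: contra ne => /eqP <-; rewrite permKV.
have -> : ((s^-1)%g i == ord0) = (nat_of_ord ((s^-1)%g i) == 0) by [].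
move=> h; rewrite (negPf h) /=; congr (_ + _); move: h; by case: (nat_of_ord ((s^-1)%g i)).
Qed.

Lemma vert_dec (x : X) (s : P) (l : nat) : 0 < x (s ord_max) -> l < n ->
  vert (decr x (s ord_max)) (pr * s)%g l.+1 = vert x s l.
Proof.
move=> xs ln; apply: functional_extensionality => i; rewrite /vert ffunE.
rewrite invgM permM prVE rsE.
case: (eqVneq i (s ord_max)) => [->|ne].
  rewrite permK /= eqxx inordK; last by have := ltn_ord (x (s ord_max)); lia.
  lia.
have : (s^-1)%g i != ord_max by apply: contra ne => /eqP <-; rewrite permKV.
have -> : ((s^-1)%g i == ord_max) = (nat_of_ord ((s^-1)%g i) == np) by [].
move=> h; rewrite (negPf h) /=; congr (_ + _); have := ltn_ord ((s^-1)%g i); lia.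
Qed.

Local Notation T := ((X * P) * 'I_n.+1)%type.

Definition door (t : T) : bool :=
  [forall c : 'I_n, [exists j' : 'I_n.+1, (j' != t.2) && (lab (vert t.1.1 t.1.2 j') == c.+1)]].
Definition full (p : X * P) : bool :=
  [forall c : 'I_n.+1, [exists j : 'I_n.+1, lab (vert p.1 p.2 j) == c]].

Definition pt (t : T) : T :=
  let: (x, s, j) := t in
  if j == ord0 then (if x (s ord0) < m then (incr x (s ord0), (pr^-1 * s)%g, ord_max) else t)
  else if j == ord_max then (if 0 < x (s ord_max) then (decr x (s ord_max), (pr * s)%g, ord0) else t)
  else (x, (tau j * s)%g, j).

Lemma pt_door t : door t -> door (pt t).
Proof.
case: t => [[x s] j] /forallP dj; rewrite /pt.
case: ifP => [/eqP j0|jn0].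
  case: ifP => [xs|//]; last by move=> _; apply/forallP.
  apply/forallP => c; have/existsP[j' /andP[nj' /eqP lj']] := dj c.
  rewrite /= j0 in nj'.
  have j'0 : 0 < j' by case: j' nj' {lj'} => [[|a] ?] //.
  apply/existsP; exists (inord j'.-1); rewrite /=.
  have jn := ltn_ord j'.
  apply/andP; split.
    by apply/eqP => /(congr1 val); rewrite /= inordK; lia.
  by rewrite inordK ?vert_inc ?prednK ?lj' //; lia.
case: ifP => [/eqP jm|jnm].
  case: ifP => [xs|_]; last by apply/forallP.
  apply/forallP => c; have/existsP[j' /andP[nj' /eqP lj']] := dj c.
  rewrite /= jm in nj'.
  have j'n : j' < n.
    have := ltn_ord j'; move: nj'; have -> : (j' != ord_max) = (nat_of_ord j' != n) by [].
    lia.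
  apply/existsP; exists (inord j'.+1); rewrite /=.
  apply/andP; split.
    by apply/eqP => /(congr1 val); rewrite /= inordK; lia.
  by rewrite inordK ?vert_dec ?lj' //; lia.
apply/forallP => c; have/existsP[j' /andP[nj' /eqP lj']] := dj c.
apply/existsP; exists j'; rewrite /= nj' /= vert_mid ?jn0 ?jnm ?lj' //.
Qed.

Lemma pt_inv t : pt (pt t) = t.
Proof.
case: t => [[x s] j]; rewrite /pt.
case: ifP => [/eqP j0|jn0].
  case: ifP => [xs|xs]; last by rewrite j0 eqxx xs.
  have e1 : (ord_max : 'I_n.+1) == ord0 = false by [].
  have e2 : (pr^-1 * s)%g ord_max = s ord0.
    by rewrite permM prVE /rs eqxx.
  rewrite e1 eqxx e2 ffunE eqxx inordK; last by lia.
  rewrite /= mulKVg j0; congr (_, _, _); apply/ffunP => i; rewrite !ffunE.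
  by case: eqP => [->|_]; apply/val_inj; rewrite /= ?inordK //; rewrite ?ffunE ?eqxx ?inordK //; lia.
case: ifP => [/eqP jm|jnm].
  case: ifP => [xs|xs]; last by rewrite jn0 jm eqxx xs.
  have e2 : (pr * s)%g ord0 = s ord_max.
    by rewrite permM prE /rp eqxx.
  have xm := ltn_ord (x (s ord_max)).
  rewrite eqxx e2 ffunE eqxx inordK; last by lia.
  have -> : (x (s ord_max)).-1 < m by lia.
  rewrite mulKg jm; congr (_, _, _); apply/ffunP => i; rewrite !ffunE.
  by case: eqP => [->|_]; apply/val_inj; rewrite /= ?inordK //; rewrite ?ffunE ?eqxx ?inordK //; lia.
rewrite jn0 jnm mulgA /tau tperm2 mul1g //.
Qed.

Definition r : P := perm (@rev_ord_inj n).
Lemma rE c : r c = rev_ord c. Proof. by rewrite permE. Qed.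
Lemma rV c : (r^-1)%g c = rev_ord c.
Proof. by rewrite -{1}(rev_ordK c) -rE permK. Qed.
Definition t0 : T := ([ffun => ord0], r, ord_max).

Lemma t0_fix : pt t0 = t0.
Proof. by rewrite /pt /t0 !ffunE /= eqxx. Qed.

Lemma t0_door : door t0.
Proof.
apply/forallP => c; apply/existsP; exists (inord (np - c)).
have cn := ltn_ord c.
apply/andP; split.
  by apply/eqP => /(congr1 val); rewrite /= inordK; lia.
apply/eqP; apply: Hfr.
- exact: vert_box.
- by rewrite /vert ffunE rV /= inordK; lia.
- move=> i ci; rewrite /vert ffunE rV /= inordK; last by lia.
  have := ltn_ord i; case: ltnP; lia.
Qed.

Lemma pt_fixed t : door t -> pt t = t -> t = t0.
Proof.
case: t => [[x s] j] /forallP dj; rewrite /pt.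
case: ifP => [/eqP j0|jn0].
  case: ifP => [_ [] _ _ /(congr1 val)|xs _]; first by rewrite j0.
  have xm : nat_of_ord (x (s ord0)) = m by have := ltn_ord (x (s ord0)); lia.
  have/existsP[j' /andP[nj' /eqP lj']] := dj (s ord0).
  rewrite /= j0 in nj'.
  have j'0 : 0 < j' by case: j' nj' {lj'} => [[|a] ?] //.
  have := Htop (vert_box x s j') (i := s ord0).
  by rewrite lj' eqxx /vert permK xm j'0 addn1 => /(_ erefl).
case: ifP => [/eqP jm|jnm]; last first.
  case=> e; have t1 : tau j = 1%g by move/(canRL (mulgK s)): e; rewrite mulgV.
  have := congr1 (fun p : P => p (inord j.-1)) t1; rewrite /= perm1 /tau tpermL.
  have jlt := ltn_ord j.
  have h0 : nat_of_ord j != 0 by apply/negbT; exact: jn0.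
  have h1 : nat_of_ord j != n by apply/negbT; exact: jnm.
  move/(congr1 val); rewrite /= !inordK; lia.
case: ifP => [_ [] _ _ /(congr1 val)|xs _]; first by rewrite jm.
have x0 : nat_of_ord (x (s ord_max)) = 0 by lia.
have zero : forall c : 'I_n, exists l : 'I_n.+1, l < n /\ vert x s l c = 0 /\
    forall i : 'I_n, c < i -> vert x s l i != 0.
  move=> c; have/existsP[j' /andP[nj' /eqP lj']] := dj c.
  have j'n : j' < n.
    have := ltn_ord j'; move: nj'; rewrite /= jm.
    have -> : (j' != ord_max) = (nat_of_ord j' != n) by []. lia.
  have vz : vert x s j' (s ord_max) = 0.
    by rewrite /vert permK x0 /=; lia.
  have [z [vz' zmax]] := frame_char vz.
  have := Hfr (vert_box x s j') vz' zmax; rewrite lj' => -[ez].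
  have -> : c = z by apply/val_inj.
  by exists j'.
have xz : forall c, nat_of_ord (x c) = 0.
  by move=> c; have [l [_ [h _]]] := zero c; move: h; rewrite /vert; lia.
have dec : forall c i : 'I_n, c < i -> (s^-1)%g i < (s^-1)%g c.
  move=> c i ci; have [l [_ [h1 h2]]] := zero c; have := h2 i ci.
  move: h1; rewrite /vert xz xz /= !add0n; case: ltnP => // h3 _; case: ltnP => // h4 _; exact: leq_trans h4 h3.
have sV := dec_rev dec.
have sr : s = r.
  apply/permP => c.
  have e : forall c, (s^-1)%g c = r c by move=> d; apply/val_inj; rewrite /= sV rE /=.
  by apply: (@perm_inj _ (s^-1)%g); rewrite permK e !rE rev_ordK.
rewrite sr jm; congr (_, _, _); apply/ffunP => i; rewrite ffunE; apply/val_inj.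
exact: xz.
Qed.

Lemma cardsum (A : finType) (pr0 : A -> bool) : #|[set a | pr0 a]| = \sum_a (pr0 a : nat).
Proof.
rewrite -sum1_card big_mkcond /=; apply: eq_bigr => a _; rewrite inE; by case: (pr0 a).
Qed.

Lemma sperner : exists p : X * P, full p.
Proof.
set D := [set t : T | door t].
have h1 : odd #|D| = odd #|[set t in D | pt t == t]|.
  apply: inv_parity => t; rewrite inE => dt; last exact: pt_inv.
  by rewrite inE pt_door.
have h2 : [set t in D | pt t == t] = [set t0].
  apply/setP => t; rewrite !inE; apply/idP/idP => [/andP[dt /eqP ft]|/eqP ->].
    by rewrite (pt_fixed dt ft).
  by rewrite t0_door t0_fix eqxx.
have h3 : #|D| = \sum_(p : X * P) #|[set j : 'I_n.+1 | door (p, j)]|.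
  have e : forall p : X * P, #|[set j : 'I_n.+1 | door (p, j)]| = \sum_j (door (p, j) : nat).
    by move=> p; exact: cardsum.
  rewrite /D cardsum (eq_bigr _ (fun p _ => e p)).
  by rewrite pair_big /=; apply: eq_big => // -[p j].
rewrite h3 odd_sumF in h1.
have h4 : \sum_(p : X * P) (odd #|[set j : 'I_n.+1 | door (p, j)]| : nat) =
          #|[set p : X * P | full p]|.
  rewrite cardsum; apply: eq_bigr => p _; congr nat_of_bool.
  have := @simplex_odd n (fun j => lab (vert p.1 p.2 j)) (fun j => Hle _).
  by rewrite /full /door; move=> <-.
rewrite h4 h2 cards1 /= in h1.
have : 0 < #|[set p : X * P | full p]| by case: #|_| h1.
by rewrite card_gt0 => /set0Pn[p]; rewrite inE; exists p.
Qed.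
End Core.

Lemma maxzero_char n (u : 'I_n -> nat) (c : 'I_n) : u c = 0 ->
  (forall i : 'I_n, c < i -> u i != 0) -> \max_(j < n | u j == 0) (j : nat) = c.
Proof.
move=> uc cmax; apply/eqP; rewrite eqn_leq; apply/andP; split.
  apply/bigmax_leqP => j /eqP uj; rewrite leqNgt; apply/negP => cj.
  by move: (cmax j cj); rewrite uj.
by apply: (@leq_bigmax_cond _ _ (fun j : 'I_n => nat_of_ord j)); rewrite uc.
Qed.

Inductive reach (N M : nat) (gc : ('I_N -> nat) -> 'I_N) (i : 'I_N) : ('I_N -> nat) -> Prop :=
| R0 u : (forall j, u j <= M) -> u i = 0 -> gc u = i -> reach M gc i u
| RS u w : reach M gc i w -> (forall j, u j <= M) ->
    (forall j, u j <= w j + 1 /\ w j <= u j + 1) -> gc u = i -> reach M gc i u.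

Lemma reach_gc N M gc i u : @reach N M gc i u -> gc u = i.
Proof. by case. Qed.

Lemma sbE (Q : Prop) (a b : nat) :
  (Q /\ (if excluded_middle_informative Q then a else b) = a) \/
  (~ Q /\ (if excluded_middle_informative Q then a else b) = b).
Proof. by case: (excluded_middle_informative Q) => h; [left|right]. Qed.

Theorem lemma3 (k n : nat) (hk : 0 < k) (hn : 0 < n) :
  ~ exists V : 'I_n -> setfam n,
      (forall i A, V i A -> forall x, A x -> lattice k x) /\
      (forall i, unif_bounded (V i)) /\
      (forall i, r_disjoint (2 * k) (V i)) /\
      (forall x, lattice k x -> exists i A, V i A /\ A x).
Proof.
case: n hn => // np _ [V [H1 [H2 [H3 H4]]]].
pose Cf (i : 'I_np.+1) := proj1_sig (constructive_indefinite_description _ (H2 i)).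
have HC : forall i A, V i A -> forall x y, A x -> A y -> supdist x y <= Cf i.
  by move=> i; rewrite /Cf; case: constructive_indefinite_description.
pose C := \max_(i < np.+1) Cf i.
have HCC : forall i A, V i A -> forall x y, A x -> A y -> supdist x y <= C.
  move=> i A VA x y Ax Ay; apply: leq_trans (HC i A VA x y Ax Ay) _.
  exact: (@leq_bigmax _ (fun i => Cf i)).
pose m := C.+1.
pose P (u : 'I_np.+1 -> nat) : point np.+1 := fun i => Posz (k * u i).
have latP : forall u, lattice k (P u).
  by move=> u i; rewrite /P; apply/dvdzP; exists (Posz (u i)); by rewrite -PoszM mulnC.
have ch : forall p : point np.+1,
    {ia : 'I_np.+1 * (point np.+1 -> Prop) | lattice k p -> V ia.1 ia.2 /\ ia.2 p}.
  move=> p; case: (excluded_middle_informative (lattice k p)) => [L|nL].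
    have: exists ia : 'I_np.+1 * (point np.+1 -> Prop), V ia.1 ia.2 /\ ia.2 p.
      by have [i [A h]] := H4 p L; exists (i, A).
    move/constructive_indefinite_description => [ia h]; by exists ia.
  by exists (ord0, fun _ => True).
pose col p := (proj1_sig (ch p)).1.
pose setOf p := (proj1_sig (ch p)).2.
have chP : forall u, V (col (P u)) (setOf (P u)) /\ setOf (P u) (P u).
  by move=> u; rewrite /col /setOf; case: (ch (P u)) => ia /= /(_ (latP u)).
pose frame (u : 'I_np.+1 -> nat) := [exists j, u j == 0].
pose gcol (u : 'I_np.+1 -> nat) : 'I_np.+1 :=
  if frame u then inord (\max_(j < np.+1 | u j == 0) (j : nat)) else col (P u).
have gcol_fr : forall u, frame u -> u (gcol u) = 0.
  move=> u fu; rewrite /gcol fu; move/existsP: fu => [j0 /eqP u0].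
  have [z [uz zmax]] := frame_char u0.
  rewrite (maxzero_char uz zmax); have -> : inord z = z by apply/val_inj; rewrite /= inordK.
  exact: uz.
have gcol_nfr : forall u, ~~ frame u -> gcol u = col (P u).
  by move=> u /negPf fu; rewrite /gcol fu.
have nfr : forall u, ~~ frame u -> forall j, u j != 0.
  by move=> u /existsPn h j; apply: h.
have sd_adj : forall u w : 'I_np.+1 -> nat, (forall j, u j <= w j + 1 /\ w j <= u j + 1) ->
    supdist (P u) (P w) <= k.
  move=> u w adj; apply/bigmax_leqP => j _; have [a1 a2] := adj j; rewrite /P; nia.
have sd_low : forall (u w : 'I_np.+1 -> nat) j, k * (u j - w j) <= supdist (P u) (P w).
  move=> u w j; apply: leq_trans (leq_bigmax j); rewrite /P; nia.
pose M := m.+1.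
have inv : forall i u, reach M gcol i u ->
    u i = 0 \/ (~~ frame u /\ exists s, s i = 1 /\ setOf (P u) (P s)).
  move=> i u r; induction r as [u0 _ ui _|u w rw IH ub adj gu]; first by left.
  case fu: (frame u).
    by left; rewrite -gu; apply: gcol_fr; rewrite fu.
  have nfu : ~~ frame u by rewrite fu.
  right; split => //.
  case: IH => [wi|[nfw [s [si Ss]]]].
    exists u; split; last exact: (chP u).2.
    have := nfr u nfu i; have := adj i; rewrite wi; lia.
  exists s; split => //.
  have gw := reach_gc rw.
  case: (classic (setOf (P u) = setOf (P w))) => [-> //|ne].
  exfalso.
  have Vu : V i (setOf (P u)) by rewrite -gu gcol_nfr //; exact: (chP u).1.
  have Vw : V i (setOf (P w)) by rewrite -gw gcol_nfr //; exact: (chP w).1.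
  have := H3 i _ _ Vu Vw ne _ _ (chP u).2 (chP w).2.
  have := sd_adj u w adj; lia.
pose lab (u : 'I_np.+1 -> nat) : nat :=
  if excluded_middle_informative (reach M gcol (gcol u) u) then (gcol u).+1 else 0.
have Hle : forall v, lab v <= np.+1.
  by move=> v; rewrite /lab; case: (sbE (reach M gcol (gcol v) v) (gcol v).+1 0) => -[_ ->] //; apply: ltn_ord.
have Hfr : forall v (c : 'I_np.+1), (forall j, v j <= m.+1) -> v c = 0 ->
    (forall i : 'I_np.+1, c < i -> v i != 0) -> lab v = c.+1.
  move=> v c vb vc cmax.
  have fv : frame v by apply/existsP; exists c; rewrite vc.
  have gv : gcol v = c.
    rewrite /gcol fv (maxzero_char vc cmax); apply/val_inj; rewrite /= inordK //.
  rewrite /lab; case: (sbE (reach M gcol (gcol v) v) (gcol v).+1 0) => -[nr ->]; first by rewrite gv.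
  exfalso; apply: nr; rewrite gv.
  by apply: R0.
have Htop : forall v (i : 'I_np.+1), (forall j, v j <= m.+1) -> v i = m.+1 -> lab v != i.+1.
  move=> v i vb vi; rewrite /lab; case: (sbE (reach M gcol (gcol v) v) (gcol v).+1 0) => -[rv ->] //.
  apply/negP => /eqP [/val_inj gv]; rewrite gv in rv.
  case: (inv _ _ rv) => [|[nfv [s [si Ss]]]]; first by rewrite vi.
  have Vv : V i (setOf (P v)) by rewrite -gv gcol_nfr //; exact: (chP v).1.
  have := HCC i _ Vv _ _ (chP v).2 Ss.
  have := sd_low v s i; rewrite vi si /m; nia.
have [[x s] /forallP fl] := sperner Hle Htop Hfr.
have/existsP[j0 /eqP l0] := fl ord0.
move: l0; rewrite /lab; case: (sbE (reach M gcol (gcol (vert x s j0)) (vert x s j0)) (gcol (vert x s j0)).+1 0) => -[nr ->] // _.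
have/existsP[j1 /eqP l1] := fl (inord (gcol (vert x s j0)).+1).
move: l1; rewrite /lab inordK; last by rewrite ltnS.
case: (sbE (reach M gcol (gcol (vert x s j1)) (vert x s j1)) (gcol (vert x s j1)).+1 0) => -[r1 ->] // [/val_inj e1].
apply: nr; apply: (RS (w := vert x s j1)).
- by rewrite -e1.
- exact: vert_box.
- by move=> j; rewrite /vert; case: (_ < j0); case: (_ < j1); lia.
- by [].
Qed.
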